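(* Let $R$ be a commutative local ring and $s\in R$. Then every upper triangular element $\left[\begin{smallmatrix} a&b\\ 0&c\end{smallmatrix}\right]$ ($a,b,c\in R$) of $M_2(R;s)$ is strongly clean in $M_2(R;s)$.
   Context: A commutative ring $R$ is local if it has a unique maximal ideal. For a commutative ring $R$ and $s\in R$, $M_2(R;s)$ denotes the ring whose elements are the $2\times 2$ arrays $\left[\begin{smallmatrix} a&b\\ c&d\end{smallmatrix}\right]$ with $a,b,c,d\in R$, with componentwise addition and multiplication $\left[\begin{smallmatrix} a&b\\ c&d\end{smallmatrix}\right]\left[\begin{smallmatrix} a'&b'\\ c'&d'\end{smallmatrix}\right]=\left[\begin{smallmatrix} aa'+s^2bc'&ab'+bd'\\ ca'+dc'&s^2cb'+dd'\end{smallmatrix}\right]$. An element $a$ of a ring $T$ is strongly clean if there is an idempotent $e\in T$ with $ae=ea$ and $a-e$ a unit of $T$. *)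

(* Defs.v *)
From HB Require Import structures.
From mathcomp Require Import all_boot all_order all_algebra.
Set Implicit Arguments. Unset Strict Implicit. Unset Printing Implicit Defensive.
Import GRing.Theory.
Local Open Scope ring_scope.

Definition is_ideal (R : comNzRingType) (I : R -> Prop) : Prop :=
  [/\ I 0, (forall x y, I x -> I y -> I (x + y)) & (forall r x, I x -> I (r * x))].

Definition is_maximal_ideal (R : comNzRingType) (I : R -> Prop) : Prop :=
  [/\ is_ideal I, ~ I 1 &
    forall J : R -> Prop, is_ideal J -> (forall x, I x -> J x) ->
      (forall x, J x <-> I x) \/ (forall x, J x)].

Definition local_ring (R : comNzRingType) : Prop :=
  exists I : R -> Prop, is_maximal_ideal I /\
    forall J : R -> Prop, is_maximal_ideal J -> forall x, J x <-> I x.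

Record M2 (R : comNzRingType) := mkM2 { m11 : R; m12 : R; m21 : R; m22 : R }.

Section M2ops.
Variables (R : comNzRingType) (s : R).
Definition M2add (x y : M2 R) : M2 R :=
  mkM2 (m11 x + m11 y) (m12 x + m12 y) (m21 x + m21 y) (m22 x + m22 y).
Definition M2opp (x : M2 R) : M2 R :=
  mkM2 (- m11 x) (- m12 x) (- m21 x) (- m22 x).
Definition M2sub (x y : M2 R) : M2 R := M2add x (M2opp y).
Definition M2mul (x y : M2 R) : M2 R :=
  mkM2 (m11 x * m11 y + s ^+ 2 * m12 x * m21 y)
       (m11 x * m12 y + m12 x * m22 y)
       (m21 x * m11 y + m22 x * m21 y)
       (s ^+ 2 * m21 x * m12 y + m22 x * m22 y).
Definition M2one : M2 R := mkM2 1 0 0 1.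

Definition M2unit (u : M2 R) : Prop :=
  exists v : M2 R, M2mul u v = M2one /\ M2mul v u = M2one.
Definition M2idem (e : M2 R) : Prop := M2mul e e = e.
Definition M2strongly_clean (x : M2 R) : Prop :=
  exists e : M2 R, [/\ M2idem e, M2mul x e = M2mul e x & M2unit (M2sub x e)].
End M2ops.

(* Main.v *)
Require Import Defs.
From mathcomp Require Import all_boot all_order all_algebra.
From mathcomp Require Import ring.
From mathcomp Require Import boolp classical_sets.
Local Open Scope ring_scope.
Import GRing.Theory.
Set Implicit Arguments. Unset Strict Implicit.

Definition unitR (R : comNzRingType) (x : R) := exists y, x * y = 1.

Lemma exists_max_above (R : comNzRingType) (J : R -> Prop) :
  is_ideal J -> ~ J 1 ->
  exists A : R -> Prop, is_maximal_ideal A /\ (forall x, J x -> A x).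
Proof.
move=> [J0 JD JM] J1.
pose P := fun K : set R => K = set0 \/
  (is_ideal K /\ (forall x, J x -> K x) /\ ~ K 1).
have [A [PA Amax]] : exists A, P A /\ forall B, (A `<` B)%classic -> ~ P B.
  apply: Zorn_bigcup => F FP Ftot.
  case: (pselect (exists X, F X /\ X <> set0)) => [[X0 [FX0 X0n]]|nF].
  - have ideF : forall X, F X -> X <> set0 ->
        is_ideal X /\ (forall x, J x -> X x) /\ ~ X 1.
      by move=> X FX Xn; case: (FP X FX).
    right; have [[X00 X0D X0M] [X0J X01]] := ideF _ FX0 X0n.
    split; [split|split].
    + by exists X0.
    + move=> x y [X FX Xx] [Y FY Yy].
      have Xn : X <> set0 by move=> E; rewrite E in Xx.
      have Yn : Y <> set0 by move=> E; rewrite E in Yy.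
      have [[_ XD _] _] := ideF _ FX Xn.
      have [[_ YD _] _] := ideF _ FY Yn.
      case: (Ftot X Y FX FY) => [XY|YX].
      * by exists Y => //; apply: YD => //; apply: XY.
      * by exists X => //; apply: XD => //; apply: YX.
    + move=> r x [X FX Xx].
      have Xn : X <> set0 by move=> E; rewrite E in Xx.
      have [[_ _ XM] _] := ideF _ FX Xn.
      by exists X => //; apply: XM.
    + by move=> x Jx; exists X0 => //; apply: X0J.
    + move=> [X FX X1].
      have Xn : X <> set0 by move=> E; rewrite E in X1.
      by have [_ [_ []]] := ideF _ FX Xn.
  - left; apply/seteqP; split => // x [X FX Xx].
    exfalso; apply: nF; exists X; split => // E; by rewrite E in Xx.
have PJ : P J by right; split => //; split.
case: PA => [A0|[Aide [AJ A1]]].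
  exfalso; apply: (Amax J) => //; rewrite A0; split => //.
  by move=> E; have := E 0 J0.
exists A; split => //; split => // K Kide AK.
case: (pselect (K 1)) => [K1|K1].
  right => x; have [_ _ KM] := Kide; by rewrite -(mulr1 x); apply: KM.
left; case: (pselect (A = K)) => [->//|AneK].
exfalso; apply: (Amax K).
  by split => // KA; apply: AneK; apply/seteqP; split.
right; split => //; split => // x Jx; exact/AK/AJ.
Qed.

Lemma local_nonunit (R : comNzRingType) (hR : local_ring R) :
  exists I : R -> Prop, is_ideal I /\ ~ I 1 /\ forall x : R, ~ unitR x -> I x.
Proof.
have [I [[Iide I1 _] Iuniq]] := hR.
exists I; split => //; split => // x xn.
pose J := fun z : R => exists r, z = r * x.
have Jide : is_ideal J.
  split; first by exists 0; rewrite mul0r.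
  - by move=> y z [r ->] [t ->]; exists (r + t); rewrite mulrDl.
  - by move=> r y [t ->]; exists (r * t); rewrite mulrA.
have J1 : ~ J 1 by move=> [r E]; apply: xn; exists r; rewrite mulrC E.
have [A [Amax AJ]] := exists_max_above Jide J1.
by apply/(Iuniq A Amax)/AJ; exists 1; rewrite mul1r.
Qed.

Lemma ut_mul (R : comNzRingType) (s a b c a' b' c' : R) :
  M2mul s (mkM2 a b 0 c) (mkM2 a' b' 0 c') = mkM2 (a*a') (a*b'+b*c') 0 (c*c').
Proof. rewrite /M2mul /=; congr mkM2; ring. Qed.

Lemma ut_unit (R : comNzRingType) (s a b c : R) :
  unitR a -> unitR c -> M2unit s (mkM2 a b 0 c).
Proof.
move=> [a' Ha] [c' Hc]; exists (mkM2 a' (-(a'*b*c')) 0 c').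
rewrite !ut_mul; split; congr mkM2 => //; try by rewrite mulrC.
- have -> : a * - (a' * b * c') + b * c' = - ((a*a') * b * c') + b * c' by ring.
  by rewrite Ha mul1r addNr.
- have -> : a' * b + - (a' * b * c') * c = a' * b - a' * b * (c * c') by ring.
  by rewrite Hc mulr1 subrr.
Qed.

Theorem lemma3p5 (R : comNzRingType) (s : R) (hR : local_ring R) (a b c : R) :
  M2strongly_clean s (mkM2 a b 0 c).
Proof.
have [I [[I0 ID IM] [I1 Inu]]] := local_nonunit hR.
have Inot : forall x : R, I x -> ~ unitR x.
  by move=> x Ix [y Hy]; apply: I1; rewrite -Hy mulrC; apply: IM.
have dich : forall x : R, unitR x \/ unitR (x - 1).
  move=> x; case: (pselect (unitR x)) => [|xn]; first by left.
  case: (pselect (unitR (x - 1))) => [|yn]; first by right.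
  exfalso; apply: I1.
  have -> : 1 = x + (-1) * (x - 1) by ring.
  by apply: ID; [apply: Inu | apply: IM; apply: Inu].
have diff : forall x y : R, unitR x -> ~ unitR y -> unitR (y - x).
  move=> x y ux ny; case: (pselect (unitR (y - x))) => // n; exfalso.
  apply: (Inot x) => //.
  have -> : x = y + (-1) * (y - x) by ring.
  by apply: ID; [apply: Inu | apply: IM; apply: Inu].
have E0 : unitR a -> unitR c -> M2strongly_clean s (mkM2 a b 0 c).
  move=> ua uc; exists (mkM2 0 0 0 0); split.
  - by rewrite /M2idem /M2mul /=; congr mkM2; ring.
  - by rewrite /M2mul /=; congr mkM2; ring.
  - rewrite /M2sub /M2add /M2opp /= !oppr0 !addr0; exact: ut_unit.
have subE : forall (a b c a' b' c' : R), M2sub (mkM2 a b 0 c) (mkM2 a' b' 0 c')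
    = mkM2 (a - a') (b - b') 0 (c - c').
  by move=> *; rewrite /M2sub /M2add /M2opp /= oppr0 addr0.
case: (dich a) => [ua|ua1]; case: (dich c) => [uc|uc1].
- exact: E0.
- case: (pselect (unitR c)) => [uc|nc]; first exact: E0.
  have [t Ht] := diff a c ua nc.
  exists (mkM2 0 (b * t) 0 1); split.
  + by rewrite /M2idem ut_mul; congr mkM2; ring.
  + rewrite !ut_mul; congr mkM2; try ring.
    have -> : 0 * b + b * t * c = a * (b * t) + b * (t * (c - a)) by ring.
    by rewrite mulrC in Ht; rewrite Ht; ring.
  + rewrite subE; apply: ut_unit => //; by rewrite subr0.
- case: (pselect (unitR a)) => [ua|na]; first exact: E0.
  have [t Ht] := diff c a uc na.
  exists (mkM2 1 (b * t) 0 0); split.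
  + by rewrite /M2idem ut_mul; congr mkM2; ring.
  + rewrite !ut_mul; congr mkM2; try ring.
    have -> : a * (b * t) = b * (t * (a - c)) + c * (b * t) by ring.
    by rewrite mulrC in Ht; rewrite Ht; ring.
  + rewrite subE; apply: ut_unit => //; by rewrite subr0.
- exists (mkM2 1 0 0 1); split.
  + by rewrite /M2idem ut_mul; congr mkM2; ring.
  + by rewrite !ut_mul; congr mkM2; ring.
  + by rewrite subE subr0; apply: ut_unit.
Qed.
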